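(* For all formulas of $\mathbf{L_1}$: if $\vdash_T F[A_+]$ and $\vdash_T G[A_-]$, then $\vdash_T F[\ {}_+]\vee G[\ {}_-]$ (whenever this is a formula, i.e. not both removals are empty). Thus the cut rule is admissible in the tableau calculus for $\mathbf{L_1}$.
   Context: Formulas of $\mathbf{L_1}$: built from atomic formulas $\epsilon ab$ ($a,b$ name variables, possibly equal) with connectives $\vee,\sim$. Disjunctions may be associated in any way. Positive/negative parts (occurrences): $A$ is a positive part of $A$; if $B\vee C$ is a positive part then $B,C$ are positive parts; if $\sim B$ is a positive part then $B$ is a negative part; if $\sim B$ is a negative part then $B$ is a positive part. $F[B_+]$ ($G[B_-]$) denotes a formula with a specified occurrence of $B$ as positive (negative) part; $F[B_+,C_-]$ etc. denote specified non-overlapping occurrences. Removal: $F[\ {}_+]$ (resp. $G[\ {}_-]$) is the formula or empty expression obtained by deleting the specified occurrence: if $F[A_+]$ is $A$ then $F[\ {}_+]$ is empty; if $F[A_+]$ is $F_1[(A\vee B)_+]$ or $F_1[(B\vee A)_+]$ then $F[\ {}_+]=F_1[B_+]$; if $F[A_+]$ is $G_1[(\sim A)_-]$ then $F[\ {}_+]=G_1[\ {}_-]$; if $G[A_-]$ is $F_1[(\sim A)_+]$ then $G[\ {}_-]=F_1[\ {}_+]$. The disjunction of the empty expression with a formula $C$ is $C$. Tableaux: reduction rules ($\vee_-$) $G[B\vee C_-]$ $\mapsto$ two branches $G[B\vee C_-]\vee\sim B$, $G[B\vee C_-]\vee\sim C$; ($\epsilon_1$) $G[\epsilon ab_-]\mapsto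 G[\epsilon ab_-]\vee\sim\epsilon aa$; ($\epsilon_2$) $G[\epsilon ab_-,\epsilon bc_-]\mapsto G[\epsilon ab_-,\epsilon bc_-]\vee\sim\epsilon ac$; ($\epsilon_{3b}$) $G[\epsilon ab_-,\epsilon bb_-]\mapsto G[\epsilon ab_-,\epsilon bb_-]\vee\sim\epsilon ba$. A tableau for $A$ is a finite tree with root $A$ whose non-leaf nodes have as children the result of applying one rule. A branch is closed if its last formula has the form $F[B_+,B_-]$; a tableau is closed if all branches are. $\vdash_T A$: $A$ has a closed tableau. *)

(* Defs.v *)
From Stdlib Require Import List.
Import ListNotations.

Inductive form : Type :=
| Eps : nat -> nat -> form
| Or  : form -> form -> form
| Neg : form -> form.

(* A step of an occurrence path: left/right disjunct, or under a negation. *)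
Inductive step : Type := SL | SR | SN.
Definition path := list step.

(* occ s F p t A : starting at F in polarity s (true = positive),
   following p we reach a part A of polarity t (false = negative).
   Disjunctions are only entered in positive parts, negations anywhere,
   exactly as in the inductive definition of positive/negative parts. *)
Inductive occ : bool -> form -> path -> bool -> form -> Prop :=
| occ_here  : forall s F, occ s F [] s F
| occ_orL   : forall B C p t A, occ true B p t A -> occ true (Or B C) (SL :: p) t A
| occ_orR   : forall B C p t A, occ true C p t A -> occ true (Or B C) (SR :: p) t A
| occ_neg   : forall s B p t A, occ (negb s) B p t A -> occ s (Neg B) (SN :: p) t A.

Definition pos_part (F : form) (p : path) (A : form) : Prop := occ true F p true A.
Definition neg_part (F : form) (p : path) (A : form) : Prop := occ true F p false A.

(* Removal of the occurrence at path p; None = the empty expression.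
   Removing A from A\/B or B\/A yields B; removing A from ~A removes ~A. *)
Fixpoint remove (F : form) (p : path) : option form :=
  match p, F with
  | [], _ => None
  | SL :: q, Or B C =>
      match remove B q with None => Some C | Some B' => Some (Or B' C) end
  | SR :: q, Or B C =>
      match remove C q with None => Some B | Some C' => Some (Or B C') end
  | SN :: q, Neg B =>
      match remove B q with None => None | Some B' => Some (Neg B') end
  | _, _ => Some F   (* ill-formed path; never used for genuine occurrences *)
  end.

Definition odisj (X Y : option form) : option form :=
  match X, Y with
  | Some A, Some B => Some (Or A B)
  | Some A, None => Some A
  | None, Some B => Some B
  | None, None => None
  end.

(* A branch is closed if its last formula has the form F[B+, B-]. *)
Definition closed_formula (F : form) : Prop :=
  exists p q B, pos_part F p B /\ neg_part F q B.

(* provable F : F has a closed tableau (finite tree with root F, each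
   non-leaf node's children obtained by one reduction rule, all leaves closed). *)
Inductive provable : form -> Prop :=
| prov_closed : forall G, closed_formula G -> provable G
| prov_or : forall G p B C,
    neg_part G p (Or B C) ->
    provable (Or G (Neg B)) -> provable (Or G (Neg C)) -> provable G
| prov_eps1 : forall G p a b,
    neg_part G p (Eps a b) ->
    provable (Or G (Neg (Eps a a))) -> provable G
| prov_eps2 : forall G p1 p2 a b c,
    p1 <> p2 -> neg_part G p1 (Eps a b) -> neg_part G p2 (Eps b c) ->
    provable (Or G (Neg (Eps a c))) -> provable G
| prov_eps3b : forall G p1 p2 a b,
    p1 <> p2 -> neg_part G p1 (Eps a b) -> neg_part G p2 (Eps b b) ->
    provable (Or G (Neg (Eps b a))) -> provable G.

(* Main.v *)
From Pilot Require Import Defs.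
From Stdlib Require Import List Lia Classical.
Import ListNotations.
Import Pilot.Defs.

Fixpoint eval (v : nat -> nat -> Prop) (F : form) : Prop :=
  match F with
  | Eps a b => v a b
  | Or B C => eval v B \/ eval v C
  | Neg B => ~ eval v B
  end.

Definition closedv (v : nat -> nat -> Prop) : Prop :=
  (forall a b, v a b -> v a a) /\
  (forall a b c, v a b -> v b c -> v a c) /\
  (forall a b, v a b -> v b b -> v b a).

Definition valid (F : form) : Prop := forall v, closedv v -> eval v F.

Definition sfalse v (s : bool) F := if s then ~ eval v F else eval v F.
Definition strue v (s : bool) F := if s then eval v F else ~ eval v F.

Lemma occ_false v s F p t A : occ s F p t A -> sfalse v s F -> sfalse v t A.
Proof.
  induction 1; simpl; auto.
  - intros H1. apply IHocc. simpl. tauto.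
  - intros H1. apply IHocc. simpl. tauto.
  - intros H1. apply IHocc. destruct s; simpl in *; auto. apply NNPP; auto.
Qed.

Lemma soundness F : provable F -> valid F.
Proof.
  induction 1; intros v Hv; apply NNPP; intro Hn.
  - destruct H as (p & q & B & Hp & Hq).
    pose proof (occ_false v _ _ _ _ _ Hp Hn) as H1.
    pose proof (occ_false v _ _ _ _ _ Hq Hn) as H2. simpl in *. auto.
  - pose proof (occ_false v _ _ _ _ _ H Hn) as K1. simpl in K1.
    destruct K1 as [K1|K1].
    + destruct (IHprovable1 v Hv); auto.
    + destruct (IHprovable2 v Hv); auto.
  - pose proof (occ_false v _ _ _ _ _ H Hn) as K1. simpl in K1.
    destruct (IHprovable v Hv) as [h|h]; auto. apply h. simpl. apply (proj1 Hv _ _ K1).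
  - pose proof (occ_false v _ _ _ _ _ H0 Hn) as K3.
    pose proof (occ_false v _ _ _ _ _ H1 Hn) as K4. simpl in *.
    destruct (IHprovable v Hv) as [h|h]; auto. apply h. simpl.
    exact (proj1 (proj2 Hv) _ _ _ K3 K4).
  - pose proof (occ_false v _ _ _ _ _ H0 Hn) as K3.
    pose proof (occ_false v _ _ _ _ _ H1 Hn) as K4. simpl in *.
    destruct (IHprovable v Hv) as [h|h]; auto. apply h. simpl.
    exact (proj2 (proj2 Hv) _ _ K3 K4).
Qed.

Definition ostrue v s (o : option form) :=
  match o with Some F' => strue v s F' | None => False end.

Lemma remove_occ v s F p t A : occ s F p t A -> strue v s F ->
  ostrue v s (remove F p) \/ strue v t A.
Proof.
  induction 1; simpl; auto.
  - intros [HB|HC].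
    + destruct (IHocc HB) as [h|h]; auto. left.
      destruct (remove B p); simpl in *; tauto.
    + left. destruct (remove B p); simpl; tauto.
  - intros [HB|HC].
    + left. destruct (remove C p); simpl; tauto.
    + destruct (IHocc HC) as [h|h]; auto. left.
      destruct (remove C p); simpl in *; tauto.
  - intros H1. assert (H2 : strue v (negb s) B).
    { destruct s; simpl in *; auto. apply NNPP; auto. }
    destruct (IHocc H2) as [h|h]; auto. left.
    destruct (remove B p); simpl in *; auto.
    destruct s; simpl in *; tauto.
Qed.

Lemma cut_semantic F G A p q : pos_part F p A -> neg_part G q A ->
  valid F -> valid G -> forall H, odisj (remove F p) (remove G q) = Some H -> valid H.
Proof.
  intros HF HG VF VG H E v Hv.
  destruct (remove_occ v _ _ _ _ _ HF (VF v Hv)) as [h1|h1];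
  destruct (remove_occ v _ _ _ _ _ HG (VG v Hv)) as [h2|h2];
  destruct (remove F p) as [F'|]; destruct (remove G q) as [G'|];
  simpl in *; inversion E; subst; simpl; try tauto.
Qed.

Definition negp G X := exists q, neg_part G q X.

Lemma form_eq_dec (x y : form) : {x = y} + {x <> y}.
Proof. decide equality; apply PeanoNat.Nat.eq_dec. Defined.

Lemma step_eq_dec (x y : step) : {x = y} + {x <> y}.
Proof. decide equality. Defined.

Lemma occ_trans s F p t A p' t' X :
  occ s F p t A -> occ t A p' t' X -> occ s F (p ++ p') t' X.
Proof. induction 1; simpl; intros; try constructor; auto. Qed.

Lemma occ_det s F p t A : occ s F p t A -> forall t' A', occ s F p t' A' -> t = t' /\ A = A'.
Proof.
  induction 1; intros t' A' H'; inversion H'; subst; auto.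
Qed.

Lemma counter G : ~ closed_formula G ->
  (forall B C, negp G (Or B C) -> negp G B \/ negp G C) ->
  forall X, (forall p, pos_part G p X -> ~ eval (fun a b => negp G (Eps a b)) X) /\
            (forall p, neg_part G p X -> eval (fun a b => negp G (Eps a b)) X).
Proof.
  intros Hnc Hsat X. induction X as [a b|B IHB C IHC|B IHB]; split; simpl.
  - intros p Hp [q Hq]. apply Hnc. exists p, q, (Eps a b). auto.
  - intros p Hp. exists p; auto.
  - intros p Hp [h|h].
    + apply (proj1 IHB (p ++ [SL])); auto.
      eapply occ_trans; [exact Hp|]. constructor; constructor.
    + apply (proj1 IHC (p ++ [SR])); auto.
      eapply occ_trans; [exact Hp|]. constructor; constructor.
  - intros p Hp. destruct (Hsat B C (ex_intro _ p Hp)) as [[q Hq]|[q Hq]].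
    + left. exact (proj2 IHB q Hq).
    + right. exact (proj2 IHC q Hq).
  - intros p Hp h. apply h. apply (proj2 IHB (p ++ [SN])).
    eapply occ_trans; [exact Hp|]. constructor; constructor.
  - intros p Hp h. apply (proj1 IHB (p ++ [SN])); auto.
    eapply occ_trans; [exact Hp|]. constructor; constructor.
Qed.

Lemma extend (U R : list form) G X
  (U1 : forall B C, In (Or B C) U -> In B U /\ In C U)
  (U2 : forall B, In (Neg B) U -> In B U) :
  In X U -> ~ negp G X ->
  (forall Y, In Y U -> negp G Y \/ In Y R) ->
  (forall Y, negp G Y -> In Y U) ->
  exists R', length R' < length R /\
    (forall Y, In Y U -> negp (Or G (Neg X)) Y \/ In Y R') /\
    (forall Y, negp (Or G (Neg X)) Y -> In Y U).
Proof.
  intros HX HnX I1 I2.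
  assert (HR : In X R) by (destruct (I1 X HX); tauto).
  exists (List.remove form_eq_dec X R). split; [apply remove_length_lt; auto|]. split.
  - intros Y HY. destruct (I1 Y HY) as [[q Hq]|h].
    + left. exists (SL :: q). constructor. exact Hq.
    + destruct (form_eq_dec Y X) as [->|ne].
      * left. exists [SR; SN]. constructor. constructor. constructor.
      * right. apply in_in_remove; auto.
  - assert (Hin : forall s Y p t Z, occ s Y p t Z -> In Y U -> In Z U).
    { induction 1; intros HI.
      - exact HI.
      - apply IHocc. apply (U1 _ _ HI).
      - apply IHocc. apply (U1 _ _ HI).
      - apply IHocc. apply U2; auto. }
    intros Y [q Hq]. unfold neg_part in Hq. inversion Hq; subst.
    + apply I2. exists p; auto.
    + match goal with h : occ true (Neg X) _ _ _ |- _ => inversion h; subst end.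
      eapply Hin; eauto.
Qed.

Lemma complete_aux (U : list form) (N : list nat)
  (U1 : forall B C, In (Or B C) U -> In B U /\ In C U)
  (U2 : forall B, In (Neg B) U -> In B U)
  (U3 : forall a b, In (Eps a b) U -> In a N /\ In b N)
  (U4 : forall a b, In a N -> In b N -> In (Eps a b) U) :
  forall n R G, length R < n ->
  (forall X, In X U -> negp G X \/ In X R) ->
  (forall X, negp G X -> In X U) -> valid G -> provable G.
Proof.
  induction n as [|n IH]; intros R G Hlen I1 I2 VG; [lia|].
  assert (Hstep : forall X, In X U -> ~ negp G X -> provable (Or G (Neg X))).
  { intros X HX HnX.
    destruct (extend U R G X U1 U2 HX HnX I1 I2) as (R' & L & J1 & J2).
    apply (IH R'); auto; [lia|]. intros v Hv. simpl. left. auto. }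
  destruct (classic (closed_formula G)) as [Hc|Hnc]; [constructor; auto|].
  destruct (classic (exists B C, negp G (Or B C) /\ ~ negp G B /\ ~ negp G C))
    as [(B & C & [q Hq] & HB & HC)|N1].
  { assert (HU := U1 _ _ (I2 _ (ex_intro _ q Hq))).
    apply (prov_or G q B C Hq); apply Hstep; tauto. }
  destruct (classic (exists a b, negp G (Eps a b) /\ ~ negp G (Eps a a)))
    as [(a & b & [q Hq] & Ha)|N2].
  { apply (prov_eps1 G q a b Hq). apply Hstep; auto.
    destruct (U3 _ _ (I2 _ (ex_intro _ q Hq))). auto. }
  destruct (classic (exists p1 p2 a b c, p1 <> p2 /\ neg_part G p1 (Eps a b) /\
     neg_part G p2 (Eps b c) /\ ~ negp G (Eps a c)))
    as [(p1 & p2 & a & b & c & Hne & H1 & H2 & Hn)|N3].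
  { apply (prov_eps2 G p1 p2 a b c Hne H1 H2). apply Hstep; auto.
    destruct (U3 _ _ (I2 _ (ex_intro _ p1 H1))).
    destruct (U3 _ _ (I2 _ (ex_intro _ p2 H2))). auto. }
  destruct (classic (exists p1 p2 a b, p1 <> p2 /\ neg_part G p1 (Eps a b) /\
     neg_part G p2 (Eps b b) /\ ~ negp G (Eps b a)))
    as [(p1 & p2 & a & b & Hne & H1 & H2 & Hn)|N4].
  { apply (prov_eps3b G p1 p2 a b Hne H1 H2). apply Hstep; auto.
    destruct (U3 _ _ (I2 _ (ex_intro _ p1 H1))). auto. }
  exfalso.
  set (v := fun a b => negp G (Eps a b)).
  assert (Hv : closedv v).
  { unfold v. split; [|split].
    - intros a b Hab. apply NNPP; intro h. apply N2. eauto.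
    - intros a b c [q1 H1] [q2 H2].
      destruct (list_eq_dec step_eq_dec q1 q2) as [->|ne].
      + destruct (occ_det _ _ _ _ _ H1 _ _ H2) as [_ E]. inversion E; subst.
        exists q2; auto.
      + apply NNPP; intro h. apply N3. exists q1, q2, a, b, c. auto.
    - intros a b [q1 H1] [q2 H2].
      destruct (list_eq_dec step_eq_dec q1 q2) as [->|ne].
      + destruct (occ_det _ _ _ _ _ H1 _ _ H2) as [_ E]. inversion E; subst.
        exists q2; auto.
      + apply NNPP; intro h. apply N4. exists q1, q2, a, b. auto. }
  assert (Hsat : forall B C, negp G (Or B C) -> negp G B \/ negp G C).
  { intros B C h. apply NNPP; intro h'. apply N1. exists B, C.
    split; auto. }
  apply (proj1 (counter G Hnc Hsat G) [] (occ_here true G)).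
  exact (VG v Hv).
Qed.

Fixpoint subs (F : form) : list form :=
  match F with
  | Eps a b => [Eps a b]
  | Or B C => Or B C :: subs B ++ subs C
  | Neg B => Neg B :: subs B
  end.

Fixpoint names (F : form) : list nat :=
  match F with
  | Eps a b => [a; b]
  | Or B C => names B ++ names C
  | Neg B => names B
  end.

Definition atoms (N : list nat) : list form :=
  flat_map (fun a => map (fun b => Eps a b) N) N.

Lemma subs_self F : In F (subs F).
Proof. destruct F; simpl; auto. Qed.

Lemma subs_trans Y X Z : In X (subs Y) -> In Z (subs X) -> In Z (subs Y).
Proof.
  induction Y; simpl; intros HX HZ.
  - destruct HX as [<-|[]]. exact HZ.
  - destruct HX as [<-|HX]; [exact HZ|]. right.
    apply in_app_or in HX as [h|h]; apply in_or_app; [left|right]; eauto.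
  - destruct HX as [<-|HX]; [exact HZ|]. right. eauto.
Qed.

Lemma subs_names Y a b : In (Eps a b) (subs Y) -> In a (names Y) /\ In b (names Y).
Proof.
  induction Y; simpl; intros H.
  - destruct H as [E|[]]. inversion E; subst. auto.
  - destruct H as [E|H]; [discriminate|].
    apply in_app_or in H as [h|h].
    + destruct (IHY1 h); split; apply in_or_app; auto.
    + destruct (IHY2 h); split; apply in_or_app; auto.
  - destruct H as [E|H]; [discriminate|]. auto.
Qed.

Lemma in_atoms N X : In X (atoms N) -> exists a b, X = Eps a b /\ In a N /\ In b N.
Proof.
  unfold atoms. intros H. apply in_flat_map in H as (a & Ha & H).
  apply in_map_iff in H as (b & <- & Hb). eauto.
Qed.

Lemma completeness H : valid H -> provable H.
Proof.
  intros VH.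
  set (N := names H). set (U := subs H ++ atoms N).
  assert (Hsub : forall X Z, In X U -> In Z (subs X) -> In Z U).
  { intros X Z HX HZ. unfold U in *. apply in_app_or in HX as [h|h].
    - apply in_or_app. left. eapply subs_trans; eauto.
    - destruct (in_atoms _ _ h) as (a & b & -> & _). simpl in HZ.
      destruct HZ as [<-|[]]. apply in_or_app; auto. }
  apply (complete_aux U N) with (n := S (length U)) (R := U).
  - intros B C h. split; apply (Hsub _ _ h); simpl; right; apply in_or_app;
      [left|right]; apply subs_self.
  - intros B h. apply (Hsub _ _ h). simpl. right. apply subs_self.
  - intros a b h. unfold U in h. apply in_app_or in h as [h|h].
    + apply subs_names; auto.
    + destruct (in_atoms _ _ h) as (a' & b' & E & ? & ?). inversion E; subst; auto.
  - intros a b ha hb. unfold U. apply in_or_app. right. unfold atoms.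
    apply in_flat_map. exists a. split; auto. apply in_map. auto.
  - lia.
  - intros X h. auto.
  - intros X [q Hq]. assert (Hin : forall s Y p t Z, occ s Y p t Z -> In Z (subs Y)).
    { induction 1; simpl; try apply subs_self.
      - right. apply in_or_app. auto.
      - right. apply in_or_app. auto.
      - auto. }
    unfold U. apply in_or_app. left. eapply Hin; eauto.
  - exact VH.
Qed.

Theorem theorem8p1 :
  forall (F G A : form) (p q : path),
    pos_part F p A -> neg_part G q A ->
    provable F -> provable G ->
    forall H : form, odisj (remove F p) (remove G q) = Some H ->
    provable H.
Proof.
  intros F G A p q HF HG PF PG H E.
  apply completeness.
  exact (cut_semantic F G A p q HF HG (soundness _ PF) (soundness _ PG) H E).
Qed.
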